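(* Let $n\geq3$, write $\mathbb{R}^{n+1}\equiv\mathbb{C}\times\mathbb{C}\times\mathbb{R}^{n-3}$ with points $(z_1,z_2,x)$, and let $m\geq1$. Let $\Gamma_m\subset O(n+1)$ be the group generated by $G_m:=\{\mathrm{e}^{2\pi\mathrm{i}j/m}:j=0,\ldots,m-1\}$, acting by $\mathrm{e}^{2\pi\mathrm{i}j/m}(z_1,z_2,x)=(\mathrm{e}^{2\pi\mathrm{i}j/m}z_1,\mathrm{e}^{2\pi\mathrm{i}j/m}z_2,x)$, together with $\tau(z_1,z_2,x)=(-\bar z_2,\bar z_1,x)$, and let $\phi_m:\Gamma_m\to\{1,-1\}$ be the homomorphism with $\phi_m(\mathrm{e}^{2\pi\mathrm{i}j/m})=1$ and $\phi_m(\tau)=-1$. Write $\Gamma_m=\{g_1,\ldots,g_m,\tau g_1,\ldots,\tau g_m\}$ with $g_j=\mathrm{e}^{2\pi\mathrm{i}(j-1)/m}$ (so $\phi_m(g_j)=1$, $g_1=1$). Let $p=(1,0,0)\in\mathbb{S}^n$, $p_j:=g_jp$, $q_j:=\tau p_j$, and $$\mu_p:=\sum_{1\leq i\neq j\leq m}(1-\cos\mathrm{d}_g(p_i,p_j))^{\frac{2-n}{2}},\qquad \widehat{\mu}_p:=\sum_{1\leq i,j\leq m}(1-\cos\mathrm{d}_g(p_i,q_j))^{\frac{2-n}{2}}.$$ Then $\mu_p-\widehat\mu_p>0$ if and only if $m\geq m_n$, where $m_n:=9$ if $n=3$, $m_n:=7$ if $n=4$, $m_n:=6$ if $n\in\{5,6\}$,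 and $m_n:=5$ if $n\geq7$.
   Context: $\mathbb{S}^n$ is the round unit sphere in $\mathbb{R}^{n+1}$ and $\mathrm{d}_g(p,p')=\arccos\langle p,p'\rangle$ is the geodesic distance. *)

(* Defs.v *)
From Stdlib Require Import Reals.
Open Scope R_scope.

(* A point of R^{n+1} is a function nat -> R; only coordinates 0..n matter.
   Identification R^{n+1} = C x C x R^{n-3}:
     coord 0 = Re z1, coord 1 = Im z1, coord 2 = Re z2, coord 3 = Im z2,
     coords 4..n = x. *)
Definition pt := nat -> R.

(* Euclidean inner product on R^{n+1} (sum_f_R0 f n = f 0 + ... + f n). *)
Definition inner (n : nat) (u v : pt) : R := sum_f_R0 (fun k => u k * v k) n.

Definition dg (n : nat) (u v : pt) : R := acos (inner n u v).

Definition rot (theta : R) (u : pt) : pt := fun k =>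
  match k with
  | 0%nat => cos theta * u 0%nat - sin theta * u 1%nat
  | 1%nat => sin theta * u 0%nat + cos theta * u 1%nat
  | 2%nat => cos theta * u 2%nat - sin theta * u 3%nat
  | 3%nat => sin theta * u 2%nat + cos theta * u 3%nat
  | _ => u k
  end.

Definition tau (u : pt) : pt := fun k =>
  match k with
  | 0%nat => - u 2%nat
  | 1%nat => u 3%nat
  | 2%nat => u 0%nat
  | 3%nat => - u 1%nat
  | _ => u k
  end.

Definition p0 : pt := fun k => match k with 0%nat => 1 | _ => 0 end.

(* g_{j+1} = e^{2 pi i j / m}, j = 0..m-1 (0-based index) *)
Definition g (m j : nat) : pt -> pt := rot (2 * PI * INR j / INR m).

Definition pj (m j : nat) : pt := g m j p0.
Definition qj (m j : nat) : pt := tau (pj m j).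

Definition expo (n : nat) : R := (2 - INR n) / 2.

Definition mu_p (n m : nat) : R :=
  sum_f_R0 (fun i => sum_f_R0 (fun j =>
    if Nat.eqb i j then 0
    else Rpower (1 - cos (dg n (pj m i) (pj m j))) (expo n)) (m - 1)) (m - 1).

Definition muhat_p (n m : nat) : R :=
  sum_f_R0 (fun i => sum_f_R0 (fun j =>
    Rpower (1 - cos (dg n (pj m i) (qj m j))) (expo n)) (m - 1)) (m - 1).

Definition m_n (n : nat) : nat :=
  match n with
  | 3%nat => 9%nat
  | 4%nat => 7%nat
  | 5%nat | 6%nat => 6%nat
  | _ => 5%nat
  end.

(* Main.v *)
Require Import Defs.
From Stdlib Require Import Reals Lra Lia Machin Factorial.
Open Scope R_scope.

Fixpoint sm (f : nat -> R) (a l : nat) : R :=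
  match l with O => 0 | S l => sm f a l + f (a + l)%nat end.

Lemma sum_sm f N : sum_f_R0 f N = sm f 0 (S N).
Proof. induction N; simpl; [ring|]. rewrite IHN. simpl. reflexivity. Qed.

Lemma sm_split f a l1 l2 : sm f a (l1 + l2) = sm f a l1 + sm f (a + l1) l2.
Proof. induction l2; simpl. rewrite Nat.add_0_r; ring.
 rewrite Nat.add_succ_r. simpl. rewrite IHl2. rewrite Nat.add_assoc. ring. Qed.

Lemma sm_ext f h a l : (forall k, (a <= k < a + l)%nat -> f k = h k) -> sm f a l = sm h a l.
Proof. induction l; intros H; simpl; auto. rewrite IHl by (intros; apply H; lia). rewrite H by lia. ring. Qed.

Lemma sm_shift f a c l : sm (fun k => f (k + c)%nat) a l = sm f (a + c) l.
Proof. induction l; simpl; auto. rewrite IHl. f_equal. f_equal. lia. Qed.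

Lemma sm_const x a l : sm (fun _ => x) a l = INR l * x.
Proof. induction l; simpl sm; [simpl; ring|]. rewrite IHl, S_INR; ring. Qed.

Lemma sum4 f n : (3 <= n)%nat -> (forall k, (4 <= k)%nat -> f k = 0) -> sum_f_R0 f n = f 0%nat + f 1%nat + f 2%nat + f 3%nat.
Proof. intros Hn Hf. induction Hn. simpl; ring. simpl. rewrite IHHn, (Hf (S m)) by lia. ring. Qed.

Definition th (m k : nat) := 2 * PI * INR k / INR m.

Lemma inner_pp n m i j : (3 <= n)%nat -> inner n (pj m i) (pj m j) = cos (th m i - th m j).
Proof. intros Hn. unfold inner. rewrite sum4 by (auto; intros k Hk; unfold pj, g, rot, p0;
  destruct k as [|[|[|[|k]]]]; try lia; ring).
 unfold pj, g, rot, p0, th. rewrite cos_minus. ring. Qed.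

Lemma inner_pq n m i j : (3 <= n)%nat -> inner n (pj m i) (qj m j) = 0.
Proof. intros Hn. unfold inner. rewrite sum4 by (auto; intros k Hk; unfold qj, tau, pj, g, rot, p0;
  destruct k as [|[|[|[|k]]]]; try lia; ring).
 unfold qj, tau, pj, g, rot, p0. ring. Qed.

Lemma muhat_val n m : (3 <= n)%nat -> (1 <= m)%nat -> muhat_p n m = INR m * INR m.
Proof. intros Hn Hm. unfold muhat_p.
 assert (E: forall i j, Rpower (1 - cos (dg n (pj m i) (qj m j))) (expo n) = 1).
 { intros. unfold dg. rewrite inner_pq by auto. rewrite cos_acos by lra.
   unfold Rpower. rewrite Rminus_0_r, ln_1, Rmult_0_r, exp_0. reflexivity. }
 transitivity (sum_f_R0 (fun _ => sum_f_R0 (fun _ => 1) (m-1)) (m-1)).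
 { apply sum_eq; intros. apply sum_eq; intros. apply E. }
 rewrite !sum_cte. replace (S (m-1)) with m by lia. ring. Qed.

Definition W n x := Rpower (1 - cos x) (expo n).
Definition U n m d := W n (th m d).

Lemma row_val n m i : (3 <= n)%nat -> (i < m)%nat ->
  sum_f_R0 (fun j => if Nat.eqb i j then 0 else Rpower (1 - cos (dg n (pj m i) (pj m j))) (expo n)) (m - 1)
  = sm (U n m) 1 (m - 1).
Proof. intros Hn Him.
 assert (Hm0 : INR m <> 0) by (apply not_0_INR; lia).
 set (T := fun j => if Nat.eqb i j then 0 else W n (th m i - th m j)).
 transitivity (sum_f_R0 T (m-1)).
 { apply sum_eq; intros j _. unfold T. destruct (Nat.eqb i j); auto.
   unfold W, dg. rewrite inner_pp by auto. rewrite cos_acos by apply COS_bound. reflexivity. }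
 rewrite sum_sm. replace (S (m-1)) with (i + (1 + (m - 1 - i)))%nat by lia.
 rewrite !sm_split. simpl (sm T (0+i) 1). unfold T at 2. rewrite Nat.add_0_r, Nat.eqb_refl.
 assert (A: sm T 0 i = sm (U n m) (m - i) i).
 { replace (m - i)%nat with (0 + (m - i))%nat by lia. rewrite <- sm_shift.
   apply sm_ext. intros k Hk. unfold T, U, W. destruct (Nat.eqb_spec i k); [lia|].
   f_equal. f_equal. unfold th. rewrite plus_INR, minus_INR by lia.
   replace (2 * PI * (INR k + (INR m - INR i)) / INR m) with (2*PI - (2 * PI * INR i / INR m - 2 * PI * INR k / INR m)) by (field; auto).
   rewrite (cos_minus (2*PI)), cos_2PI, sin_2PI. ring. }
 assert (B: sm T (0 + i + 1) (m - 1 - i) = sm (U n m) 1 (m - 1 - i)).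
 { replace (0 + i + 1)%nat with (0 + (i + 1))%nat by lia. rewrite <- sm_shift.
   replace 1%nat with (0 + 1)%nat at 2 by lia. rewrite <- sm_shift.
   apply sm_ext. intros k Hk. unfold T, U, W. destruct (Nat.eqb_spec i (k + (i+1))); [lia|].
   f_equal. f_equal. unfold th. replace (k + 1)%nat with (k + (i + 1) - i)%nat by lia.
   rewrite minus_INR by lia. rewrite <- cos_neg. f_equal. field; auto. }
 rewrite A, B.
 assert (C: sm (U n m) 1 (m - 1) = sm (U n m) 1 (m - 1 - i) + sm (U n m) (m - i) i).
 { replace (m - 1)%nat with ((m - 1 - i) + i)%nat at 1 by lia.
   rewrite sm_split. replace (1 + (m - 1 - i))%nat with (m - i)%nat by lia. reflexivity. }
 rewrite C. ring. Qed.

Lemma mu_val n m : (3 <= n)%nat -> (1 <= m)%nat -> mu_p n m = INR m * sm (U n m) 1 (m - 1).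
Proof. intros Hn Hm. unfold mu_p.
 transitivity (sum_f_R0 (fun _ => sm (U n m) 1 (m - 1)) (m-1)).
 { apply sum_eq; intros i Hi. apply row_val; auto; lia. }
 rewrite sum_cte. replace (S (m-1)) with m by lia. ring. Qed.
Definition sv (m d : nat) := sin (PI * INR d / INR m).
Definition bv (m d : nat) := / (sqrt 2 * sv m d).
Lemma sv_pos m d : (1 <= d)%nat -> (d < m)%nat -> 0 < sv m d.
Proof. intros. unfold sv. apply sin_gt_0.
 - apply Rdiv_lt_0_compat. apply Rmult_lt_0_compat. apply PI_RGT_0. apply lt_0_INR; lia. apply lt_0_INR; lia.
 - apply lt_INR in H0. assert (0 < INR d) by (apply lt_0_INR; lia). pose proof PI_RGT_0.
   apply Rmult_lt_reg_r with (INR m). lra. unfold Rdiv. rewrite Rmult_assoc, Rinv_l by lra. nra. Qed.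
Lemma U_bv n m d : (3 <= n)%nat -> (1 <= d)%nat -> (d < m)%nat -> U n m d = bv m d ^ (n - 2).
Proof. intros Hn H1 H2. pose proof (sv_pos m d H1 H2) as Hs.
 assert (Hr: 0 < sqrt 2) by (apply sqrt_lt_R0; lra).
 assert (Ha: 0 < sqrt 2 * sv m d) by (apply Rmult_lt_0_compat; auto).
 unfold U, W, bv, th. replace (2 * PI * INR d / INR m) with (2 * (PI * INR d / INR m)) by (unfold Rdiv; ring).
 rewrite cos_2a_sin.
 replace (1 - (1 - 2 * sin (PI * INR d / INR m) * sin (PI * INR d / INR m))) with (Rpower (sqrt 2 * sv m d) (INR 2)).
 2:{ rewrite Rpower_pow by auto. unfold sv. simpl. rewrite Rmult_1_r.
     replace (sqrt 2 * sin (PI * INR d / INR m) * (sqrt 2 * sin (PI * INR d / INR m))) with (sqrt 2 * sqrt 2 * (sin (PI * INR d / INR m) * sin (PI * INR d / INR m))) by ring.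
     rewrite sqrt_sqrt by lra. ring. }
 rewrite Rpower_mult. replace (INR 2 * expo n) with (- INR (n - 2)).
 2:{ unfold expo. rewrite minus_INR by lia. simpl. field. }
 rewrite Rpower_Ropp, Rpower_pow by auto. rewrite pow_inv. reflexivity. Qed.

Lemma pi_bounds : 3.14159 < PI < 3.1416.
Proof.
destruct (PI_2_3_7_ineq 2) as [H1 H2].
unfold tg_alt, PI_2_3_7_tg, Ratan_seq in H1, H2. simpl in H1, H2. lra.
Qed.

Lemma sqrt2_bounds : 1.41421 < sqrt 2 < 1.41422.
Proof. assert (H: sqrt 2 * sqrt 2 = 2) by (apply sqrt_sqrt; lra).
 assert (0 < sqrt 2) by (apply sqrt_lt_R0; lra). nra. Qed.

Lemma sin_le_mono x y : 0 <= x -> x <= y -> y <= 1.57 -> sin x <= sin y.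
Proof.
intros. destruct (Req_dec x y) as [->|]. lra.
pose proof pi_bounds. left; apply sin_increasing_1; lra.
Qed.

Lemma sin_bnd x l u : 0 <= l -> l <= x -> x <= u -> u <= 1.57 -> sin_lb l <= sin x <= sin_ub u.
Proof.
intros. pose proof pi_bounds.
pose proof (SIN l ltac:(lra) ltac:(lra)). pose proof (SIN u ltac:(lra) ltac:(lra)).
pose proof (sin_le_mono l x ltac:(lra) ltac:(lra) ltac:(lra)).
pose proof (sin_le_mono x u ltac:(lra) ltac:(lra) ltac:(lra)). lra.
Qed.

Lemma IF1 : INR (fact 1) = 1. Proof. reflexivity. Qed.
Lemma IF3 : INR (fact 3) = 6. Proof. rewrite !fact_simpl, !mult_INR; simpl; ring. Qed.
Lemma IF5 : INR (fact 5) = 120. Proof. rewrite !fact_simpl, !mult_INR; simpl; ring. Qed.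
Lemma IF7 : INR (fact 7) = 5040. Proof. rewrite !fact_simpl, !mult_INR; simpl; ring. Qed.
Lemma IF9 : INR (fact 9) = 362880. Proof. rewrite !fact_simpl, !mult_INR; simpl; ring. Qed.
Ltac evsin := unfold sin_lb, sin_ub, sin_approx, sin_term; cbn [sum_f_R0 Nat.mul Nat.add];
  rewrite ?IF1, ?IF3, ?IF5, ?IF7, ?IF9.

Lemma sv_bnd (m d : nat) (dr mr : R) : INR d = dr -> INR m = mr -> 0 < mr -> 0 <= dr ->
  3.1416 * dr / mr <= 1.57 ->
  sin_lb (3.14159 * dr / mr) <= sv m d <= sin_ub (3.1416 * dr / mr).
Proof. intros Hd Hm Hmr Hdr Hu. pose proof pi_bounds. unfold sv. rewrite Hd, Hm.
 assert (0 <= / mr) by (left; apply Rinv_0_lt_compat; auto).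
 apply sin_bnd; auto.
 - unfold Rdiv. apply Rmult_le_pos; auto. apply Rmult_le_pos; lra.
 - unfold Rdiv. apply Rmult_le_compat_r; auto. apply Rmult_le_compat_r; lra.
 - unfold Rdiv. apply Rmult_le_compat_r; auto. apply Rmult_le_compat_r; lra. Qed.

Lemma bv_le m d sl U : 0 < sl -> sl <= sv m d -> 1 <= U * 1.41421 * sl -> bv m d <= U.
Proof. intros. pose proof sqrt2_bounds. unfold bv.
 assert (0 < sqrt 2 * sv m d) by nra.
 apply (Rmult_le_reg_l (sqrt 2 * sv m d)); auto. rewrite Rinv_r by lra. nra. Qed.

Lemma bv_ge m d su L : 0 < sv m d -> sv m d <= su -> L * 1.41422 * su <= 1 -> L <= bv m d.
Proof. intros. pose proof sqrt2_bounds. unfold bv.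
 assert (0 < sqrt 2 * sv m d) by nra.
 apply (Rmult_le_reg_l (sqrt 2 * sv m d)); auto. rewrite Rinv_r by lra.
 destruct (Rle_dec L 0). nra. nra. Qed.

Ltac bvb m d dr mr L U :=
  let H := fresh in
  pose proof (sv_bnd m d dr mr ltac:(simpl; lra) ltac:(simpl; lra) ltac:(lra) ltac:(lra) ltac:(lra)) as H;
  revert H; evsin; intro H;
  split; [eapply bv_ge; [apply sv_pos; lia | apply (proj2 H) | lra]
         | eapply bv_le; [ | apply (proj1 H) | ]; lra].

Lemma b51 : 1.20299 <= bv 5 1 <= 1.20301. Proof. bvb 5%nat 1%nat 1 5 1.20299 1.20301. Qed.
Lemma b52 : 0.74349 <= bv 5 2 <= 0.74352. Proof. bvb 5%nat 2%nat 2 5 0 0. Qed.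
Lemma b61 : 1.41420 <= bv 6 1 <= 1.41422. Proof. bvb 6%nat 1%nat 1 6 0 0. Qed.
Lemma b62 : 0.81649 <= bv 6 2 <= 0.81651. Proof. bvb 6%nat 2%nat 2 6 0 0. Qed.
Lemma b71 : 1.62970 <= bv 7 1 <= 1.62973. Proof. bvb 7%nat 1%nat 1 7 0 0. Qed.
Lemma b72 : 0.90441 <= bv 7 2 <= 0.90443. Proof. bvb 7%nat 2%nat 2 7 0 0. Qed.
Lemma b73 : 0.72528 <= bv 7 3 <= 0.72533. Proof. bvb 7%nat 3%nat 3 7 0 0. Qed.
Lemma b81 : 1.84774 <= bv 8 1 <= 1.84777. Proof. bvb 8%nat 1%nat 1 8 0 0. Qed.
Lemma b82 : 0.99999 <= bv 8 2 <= 1.00001. Proof. bvb 8%nat 2%nat 2 8 0 0. Qed.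
Lemma b83 : 0.76536 <= bv 8 3 <= 0.76538. Proof. bvb 8%nat 3%nat 3 8 0 0. Qed.
Lemma b91 : 2.06742 <= bv 9 1 <= 2.06745. Proof. bvb 9%nat 1%nat 1 9 0 0. Qed.
Lemma b92 : 1.10005 <= bv 9 2 <= 1.10007. Proof. bvb 9%nat 2%nat 2 9 0 0. Qed.
Lemma b93 : 0.81649 <= bv 9 3 <= 0.81651. Proof. bvb 9%nat 3%nat 3 9 0 0. Qed.
Lemma b94 : 0.71801 <= bv 9 4 <= 0.71806. Proof. bvb 9%nat 4%nat 4 9 0 0. Qed.
Lemma b31 : 0.81649 <= bv 3 1 <= 0.81651. Proof. bvb 3%nat 1%nat 1 3 0 0. Qed.
Lemma powt x : x <= 1.20301 -> 0 <= x -> x ^ 4 <= 2.1. Proof. intros. pose proof (pow_incr x 1.20301 4 ltac:(lra)). lra. Qed.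

Lemma bsym m d : (d <= m)%nat -> (0 < m)%nat -> bv m (m - d) = bv m d.
Proof. intros. unfold bv, sv. rewrite minus_INR by auto.
 replace (PI * (INR m - INR d) / INR m) with (PI - PI * INR d / INR m).
 rewrite sin_PI_x. reflexivity. field. apply not_0_INR; lia. Qed.

Lemma bhalf m d : (2 * d = m)%nat -> (0 < m)%nat -> bv m d = / sqrt 2.
Proof. intros. unfold bv, sv. replace (PI * INR d / INR m) with (PI / 2).
 rewrite sin_PI2. ring_simplify (sqrt 2 * 1). reflexivity.
 subst m. rewrite mult_INR. simpl. field. apply not_0_INR; lia. Qed.

Lemma b41 : bv 4 1 = 1.
Proof. unfold bv, sv. replace (PI * INR 1 / INR 4) with (PI / 4) by (simpl; field).
 rewrite sin_PI4. field. apply Rgt_not_eq, sqrt_lt_R0; lra. Qed.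

Lemma bv_pos m d : (1 <= d)%nat -> (d < m)%nat -> 0 < bv m d.
Proof. intros. unfold bv. apply Rinv_0_lt_compat, Rmult_lt_0_compat. apply sqrt_lt_R0; lra. apply sv_pos; auto. Qed.

Lemma bv_lin m d : (1 <= d)%nat -> (d < m)%nat -> INR m / (sqrt 2 * PI * INR d) <= bv m d.
Proof. intros. pose proof (sv_pos m d H H0). pose proof sqrt2_bounds. pose proof pi_bounds.
 assert (0 < INR d) by (apply lt_0_INR; lia). assert (0 < INR m) by (apply lt_0_INR; lia).
 assert (HX: 0 < PI * INR d / INR m) by (unfold Rdiv; apply Rmult_lt_0_compat; [nra| apply Rinv_0_lt_compat; lra]).
 assert (Hx: sv m d < PI * INR d / INR m) by (apply sin_lt_x; auto).
 unfold bv. replace (INR m / (sqrt 2 * PI * INR d)) with (/ (sqrt 2 * (PI * INR d / INR m))) by (field; repeat split; lra).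
 left. apply Rinv_lt_contravar. apply Rmult_lt_0_compat; apply Rmult_lt_0_compat; lra. apply Rmult_lt_compat_l; lra. Qed.

Definition Sb (N m : nat) := sm (fun d => bv m d ^ N) 1 (m - 1).

Lemma sm_ge f a l c : (forall k, (a <= k < a + l)%nat -> c <= f k) -> INR l * c <= sm f a l.
Proof. induction l; intros H; simpl sm. simpl; lra. rewrite S_INR.
 assert (INR l * c <= sm f a l) by (apply IHl; intros; apply H; lia).
 assert (c <= f (a + l)%nat) by (apply H; lia). lra. Qed.

Lemma Sb_decomp N m : (5 <= m)%nat ->
  Sb N m = 2 * (bv m 1 ^ N + bv m 2 ^ N) + sm (fun d => bv m d ^ N) 3 (m - 5).
Proof. intros. unfold Sb. replace (m - 1)%nat with (2 + ((m - 5) + 2))%nat by lia.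
 rewrite !sm_split. replace (1 + 2)%nat with 3%nat by lia. simpl sm.
 replace (S (S (S (m - 5 + 0)))) with (m - 2)%nat by lia. replace (S (S (S (m - 5 + 1)))) with (m - 1)%nat by lia.
 rewrite (bsym m 2), (bsym m 1) by lia. ring. Qed.

Lemma gen1 m : (10 <= m)%nat -> INR m < Sb 1 m.
Proof. intros. rewrite Sb_decomp by lia.
 pose proof sqrt2_bounds. pose proof pi_bounds.
 assert (HM: 10 <= INR m) by (replace 10 with (INR 10) by (simpl; lra); apply le_INR; lia).
 assert (Hmid: INR (m - 5) * / sqrt 2 <= sm (fun d => bv m d ^ 1) 3 (m - 5)).
 { apply sm_ge. intros k Hk. rewrite pow_1. unfold bv.
   pose proof (sv_pos m k ltac:(lia) ltac:(lia)). assert (sv m k <= 1) by apply SIN_bound.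
   apply Rinv_le_contravar; nra. }
 rewrite minus_INR in Hmid by lia. replace (INR 5) with 5 in Hmid by (simpl; lra).
 pose proof (bv_lin m 1 ltac:(lia) ltac:(lia)). pose proof (bv_lin m 2 ltac:(lia) ltac:(lia)).
 replace (INR 1) with 1 in * by reflexivity. replace (INR 2) with 2 in * by (simpl; lra).
 rewrite !pow_1.
 set (M := INR m) in *. set (r := sqrt 2) in *.
 assert (E1: M / (r * PI * 1) = M / PI / r) by (field; lra).
 assert (E2: M / (r * PI * 2) = M / PI / 2 / r) by (field; lra).
 assert (E3: (M - 5) * / r = (M - 5) / r) by (unfold Rdiv; ring).
 assert (K: M / PI >= M / 3.1416).
 { apply Rle_ge. apply Rmult_le_compat_l. lra. apply Rinv_le_contravar; lra. }
 assert (r * M < 1.41422 * M) by nra.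
 assert (K2: 3 * (M / PI) + M - 5 > r * M) by lra.
 set (Q := M / PI) in *.
 assert (G: (3 * Q + M - 5) / r > M).
 { apply Rmult_gt_reg_l with r. lra. replace (r * ((3 * Q + M - 5) / r)) with (3 * Q + M - 5) by (field; lra). lra. }
 assert (G2: 2 * (Q / r + Q / 2 / r) + (M - 5) / r = (3 * Q + M - 5) / r) by (field; lra).
 lra. Qed.

Lemma gen2 m N : (9 <= m)%nat -> (2 <= N)%nat -> INR m < Sb N m.
Proof. intros. rewrite Sb_decomp by lia.
 pose proof sqrt2_bounds. pose proof pi_bounds.
 assert (HM: 9 <= INR m) by (replace 9 with (INR 9) by (simpl; lra); apply le_INR; lia).
 assert (Hmid: INR (m - 5) * 0 <= sm (fun d => bv m d ^ N) 3 (m - 5)).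
 { apply sm_ge. intros k Hk. apply pow_le. left; apply bv_pos; lia. }
 pose proof (bv_lin m 1 ltac:(lia) ltac:(lia)). pose proof (bv_lin m 2 ltac:(lia) ltac:(lia)).
 replace (INR 1) with 1 in * by reflexivity. replace (INR 2) with 2 in * by (simpl; lra).
 set (M := INR m) in *. set (r := sqrt 2) in *.
 assert (Hr2 : r * r = 2) by (apply sqrt_sqrt; lra).
 assert (E1: M / (r * PI * 1) = (M / PI) / r) by (field; lra).
 assert (E2: M / (r * PI * 2) = (M / PI) / 2 / r) by (field; lra).
 assert (K: M / PI >= M / 3.1416).
 { apply Rle_ge. apply Rmult_le_compat_l. lra. apply Rinv_le_contravar; lra. }
 set (Q := M / PI) in *.
 assert (Hq : Q >= 2.86) by lra.
 assert (B1 : Q / 2 / r >= 1).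
 { apply Rle_ge. apply Rmult_le_reg_l with r. lra. field_simplify; lra. }
 set (b1 := bv m 1) in *. set (b2 := bv m 2) in *.
 assert (b1 >= 1) by (unfold Rdiv in *; nra).
 assert (b2 >= 1) by lra.
 pose proof (Rle_pow b1 2 N ltac:(lra) H0). pose proof (Rle_pow b2 2 N ltac:(lra) H0).
 assert (b1 ^ 2 >= (Q / r) ^ 2).
 { apply Rle_ge, pow_incr. split; [|lra]. unfold Rdiv. apply Rmult_le_pos. lra. left; apply Rinv_0_lt_compat; lra. }
 assert (b2 ^ 2 >= (Q / 2 / r) ^ 2).
 { apply Rle_ge, pow_incr. split; lra. }
 assert (EQ1 : (Q / r) ^ 2 = Q * Q / 2) by (field_simplify; [|lra]; simpl; rewrite ?Rmult_1_r; replace (r*r) with 2; field; lra).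
 assert (EQ2 : (Q / 2 / r) ^ 2 = Q * Q / 8) by (field_simplify; [|lra]; simpl; rewrite ?Rmult_1_r; replace (r*r) with 2; field; lra).
 assert (Q * PI = M) by (unfold Q; field; lra).
 rewrite Rmult_0_r in Hmid. nra. Qed.

Lemma pow_le1 b N : 0 <= b <= 1 -> b ^ N <= 1.
Proof. intros. rewrite <- (pow1 N). apply pow_incr. lra. Qed.

Lemma invr2 : 0.70710 <= / sqrt 2 <= 0.70711.
Proof. pose proof sqrt2_bounds. split.
 - apply (Rmult_le_reg_l (sqrt 2)). lra. rewrite Rinv_r by lra. nra.
 - apply (Rmult_le_reg_l (sqrt 2)). lra. rewrite Rinv_r by lra. nra. Qed.

Lemma powge b k N : 1 <= b -> (k <= N)%nat -> b ^ k <= b ^ N.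
Proof. intros. apply Rle_pow; auto. Qed.

Ltac sbunf m := unfold Sb; cbn [sm Nat.add Nat.sub];
  replace (INR m) with (IZR (Z.of_nat m)) by (rewrite INR_IZR_INZ; reflexivity); cbn [Z.of_nat Pos.of_succ_nat Pos.succ].

Lemma cs1 N : Sb N 1 <= INR 1.
Proof. unfold Sb. simpl. lra. Qed.

Lemma cs2 N : (1 <= N)%nat -> Sb N 2 <= INR 2.
Proof. intros. sbunf 2%nat. rewrite (bhalf 2 1) by lia. pose proof invr2.
 pose proof (pow_le1 (/ sqrt 2) N ltac:(lra)). lra. Qed.

Lemma cs3 N : (1 <= N)%nat -> Sb N 3 <= INR 3.
Proof. intros. sbunf 3%nat. replace (bv 3 2) with (bv 3 1) by (symmetry; exact (bsym 3 1 ltac:(lia) ltac:(lia))).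
 pose proof b31. pose proof (pow_le1 (bv 3 1) N ltac:(lra)). lra. Qed.

Lemma cs4 N : (1 <= N)%nat -> Sb N 4 <= INR 4.
Proof. intros. sbunf 4%nat. replace (bv 4 3) with (bv 4 1) by (symmetry; exact (bsym 4 1 ltac:(lia) ltac:(lia))).
 rewrite (bhalf 4 2) by lia. rewrite b41, pow1. pose proof invr2.
 pose proof (pow_le1 (/ sqrt 2) N ltac:(lra)). lra. Qed.

Lemma cs5 N : (1 <= N)%nat -> (INR 5 < Sb N 5 <-> (5 <= N)%nat).
Proof. intros. sbunf 5%nat.
 replace (bv 5 3) with (bv 5 2) by (symmetry; exact (bsym 5 2 ltac:(lia) ltac:(lia))).
 replace (bv 5 4) with (bv 5 1) by (symmetry; exact (bsym 5 1 ltac:(lia) ltac:(lia))).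
 pose proof b51. pose proof b52.
 destruct N as [|[|[|[|[|N]]]]]; try lia.
 - split; [intro|lia]. simpl in *. lra.
 - split; [intro|lia]. pose proof (pow_incr (bv 5 1) 1.20301 2 ltac:(lra)).
   pose proof (pow_incr (bv 5 2) 0.74352 2 ltac:(lra)). lra.
 - split; [intro|lia]. pose proof (pow_incr (bv 5 1) 1.20301 3 ltac:(lra)).
   pose proof (pow_incr (bv 5 2) 0.74352 3 ltac:(lra)). lra.
 - split; [intro|lia]. pose proof (pow_incr (bv 5 1) 1.20301 4 ltac:(lra)).
   pose proof (pow_incr (bv 5 2) 0.74352 4 ltac:(lra)). lra.
 - split; [lia|intro]. pose proof (powge (bv 5 1) 5 (S (S (S (S (S N))))) ltac:(lra) ltac:(lia)).
   pose proof (pow_incr 1.20299 (bv 5 1) 5 ltac:(lra)).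
   pose proof (pow_le (bv 5 2) (S (S (S (S (S N))))) ltac:(lra)). lra. Qed.

Lemma cs6 N : (1 <= N)%nat -> (INR 6 < Sb N 6 <-> (3 <= N)%nat).
Proof. intros. sbunf 6%nat.
 replace (bv 6 4) with (bv 6 2) by (symmetry; exact (bsym 6 2 ltac:(lia) ltac:(lia))).
 replace (bv 6 5) with (bv 6 1) by (symmetry; exact (bsym 6 1 ltac:(lia) ltac:(lia))).
 rewrite (bhalf 6 3) by lia.
 pose proof b61. pose proof b62. pose proof invr2.
 destruct N as [|[|[|[|N]]]]; try lia.
 - split; [intro|lia]. simpl in *. lra.
 - split; [intro|lia]. pose proof (pow_incr (bv 6 1) 1.41422 2 ltac:(lra)).
   pose proof (pow_incr (bv 6 2) 0.81651 2 ltac:(lra)).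
   pose proof (pow_incr (/ sqrt 2) 0.70711 2 ltac:(lra)). lra.
 - split; [lia|intro]. pose proof (pow_incr 1.41420 (bv 6 1) 3 ltac:(lra)).
   pose proof (pow_incr 0.81649 (bv 6 2) 3 ltac:(lra)).
   pose proof (pow_incr 0.70710 (/ sqrt 2) 3 ltac:(lra)). lra.
 - split; [lia|intro]. pose proof (powge (bv 6 1) 4 (S (S (S (S N)))) ltac:(lra) ltac:(lia)).
   pose proof (pow_incr 1.41420 (bv 6 1) 4 ltac:(lra)).
   pose proof (pow_le (bv 6 2) (S (S (S (S N)))) ltac:(lra)).
   pose proof (pow_le (/ sqrt 2) (S (S (S (S N)))) ltac:(lra)). lra. Qed.

Lemma cs7 N : (1 <= N)%nat -> (INR 7 < Sb N 7 <-> (2 <= N)%nat).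
Proof. intros. sbunf 7%nat.
 replace (bv 7 4) with (bv 7 3) by (symmetry; exact (bsym 7 3 ltac:(lia) ltac:(lia))).
 replace (bv 7 5) with (bv 7 2) by (symmetry; exact (bsym 7 2 ltac:(lia) ltac:(lia))).
 replace (bv 7 6) with (bv 7 1) by (symmetry; exact (bsym 7 1 ltac:(lia) ltac:(lia))).
 pose proof b71. pose proof b72. pose proof b73.
 destruct N as [|[|[|N]]]; try lia.
 - split; [intro|lia]. simpl in *. lra.
 - split; [lia|intro]. pose proof (pow_incr 1.62970 (bv 7 1) 2 ltac:(lra)).
   pose proof (pow_incr 0.90441 (bv 7 2) 2 ltac:(lra)).
   pose proof (pow_incr 0.72528 (bv 7 3) 2 ltac:(lra)). lra.
 - split; [lia|intro]. pose proof (powge (bv 7 1) 3 (S (S (S N))) ltac:(lra) ltac:(lia)).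
   pose proof (pow_incr 1.62970 (bv 7 1) 3 ltac:(lra)).
   pose proof (pow_le (bv 7 2) (S (S (S N))) ltac:(lra)).
   pose proof (pow_le (bv 7 3) (S (S (S N))) ltac:(lra)). lra. Qed.

Lemma cs8 N : (1 <= N)%nat -> (INR 8 < Sb N 8 <-> (2 <= N)%nat).
Proof. intros. sbunf 8%nat.
 replace (bv 8 5) with (bv 8 3) by (symmetry; exact (bsym 8 3 ltac:(lia) ltac:(lia))).
 replace (bv 8 6) with (bv 8 2) by (symmetry; exact (bsym 8 2 ltac:(lia) ltac:(lia))).
 replace (bv 8 7) with (bv 8 1) by (symmetry; exact (bsym 8 1 ltac:(lia) ltac:(lia))).
 rewrite (bhalf 8 4) by lia.
 pose proof b81. pose proof b82. pose proof b83. pose proof invr2.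
 destruct N as [|[|[|N]]]; try lia.
 - split; [intro|lia]. simpl in *. lra.
 - split; [lia|intro]. pose proof (pow_incr 1.84774 (bv 8 1) 2 ltac:(lra)).
   pose proof (pow_incr 0.99999 (bv 8 2) 2 ltac:(lra)).
   pose proof (pow_incr 0.76536 (bv 8 3) 2 ltac:(lra)).
   pose proof (pow_incr 0.70710 (/ sqrt 2) 2 ltac:(lra)). lra.
 - split; [lia|intro]. pose proof (powge (bv 8 1) 3 (S (S (S N))) ltac:(lra) ltac:(lia)).
   pose proof (pow_incr 1.84774 (bv 8 1) 3 ltac:(lra)).
   pose proof (pow_le (bv 8 2) (S (S (S N))) ltac:(lra)).
   pose proof (pow_le (bv 8 3) (S (S (S N))) ltac:(lra)).
   pose proof (pow_le (/ sqrt 2) (S (S (S N))) ltac:(lra)). lra. Qed.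

Lemma cs9 : INR 9 < Sb 1 9.
Proof. sbunf 9%nat.
 replace (bv 9 5) with (bv 9 4) by (symmetry; exact (bsym 9 4 ltac:(lia) ltac:(lia))).
 replace (bv 9 6) with (bv 9 3) by (symmetry; exact (bsym 9 3 ltac:(lia) ltac:(lia))).
 replace (bv 9 7) with (bv 9 2) by (symmetry; exact (bsym 9 2 ltac:(lia) ltac:(lia))).
 replace (bv 9 8) with (bv 9 1) by (symmetry; exact (bsym 9 1 ltac:(lia) ltac:(lia))).
 pose proof b91. pose proof b92. pose proof b93. pose proof b94. simpl. lra. Qed.

Lemma main N m : (1 <= N)%nat -> (1 <= m)%nat -> (INR m < Sb N m <-> (m_n (N + 2) <= m)%nat).
Proof. intros HN Hm. rewrite Nat.add_comm.
 assert (Hmn: (m_n (2 + N) <= 9)%nat) by (destruct N as [|[|[|[|[|N]]]]]; simpl; lia).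
 destruct (Compare_dec.le_lt_dec 10 m) as [H10|H10].
 { split; [lia|intros _]. destruct (Nat.eq_dec N 1) as [->|]. apply gen1; auto. apply gen2; lia. }
 destruct m as [|[|[|[|[|[|[|[|[|[|m]]]]]]]]]]; try lia.
 - pose proof (cs1 N). split; [lra|]. destruct N as [|[|[|[|[|N]]]]]; simpl; lia.
 - pose proof (cs2 N HN). split; [lra|]. destruct N as [|[|[|[|[|N]]]]]; simpl; lia.
 - pose proof (cs3 N HN). split; [lra|]. destruct N as [|[|[|[|[|N]]]]]; simpl; lia.
 - pose proof (cs4 N HN). split; [lra|]. destruct N as [|[|[|[|[|N]]]]]; simpl; lia.
 - rewrite (cs5 N HN). destruct N as [|[|[|[|[|N]]]]]; simpl; lia.
 - rewrite (cs6 N HN). destruct N as [|[|[|[|[|N]]]]]; simpl; lia.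
 - rewrite (cs7 N HN). destruct N as [|[|[|[|[|N]]]]]; simpl; lia.
 - rewrite (cs8 N HN). destruct N as [|[|[|[|[|N]]]]]; simpl; lia.
 - split; [lia|intros _]. destruct (Nat.eq_dec N 1) as [->|]. apply cs9. apply gen2; lia.
Qed.

Theorem lemma4p1 (n m : nat) (hn : (3 <= n)%nat) (hm : (1 <= m)%nat) :
  mu_p n m - muhat_p n m > 0 <-> (m_n n <= m)%nat.
Proof.
 rewrite mu_val, muhat_val by auto.
 assert (E: sm (U n m) 1 (m - 1) = Sb (n - 2) m).
 { unfold Sb. apply sm_ext. intros k Hk. apply U_bv; lia. }
 rewrite E. replace n with ((n - 2) + 2)%nat at 2 by lia.
 rewrite <- (main (n - 2) m) by lia.
 assert (0 < INR m) by (apply lt_0_INR; lia).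
 split; intro H1.
 - assert (0 < INR m * (Sb (n - 2) m - INR m)) by lra.
   destruct (Rlt_dec (INR m) (Sb (n-2) m)); auto. nra.
 - nra.
Qed.
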